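(* Every superset-closed adversary $\mathcal A\subseteq 2^\Pi$ is fair, i.e. for all $P\subseteq\Pi$ and $Q\subseteq P$, $\mathit{setcon}(\mathcal A|_{P,Q})=\min(|Q|,\mathit{setcon}(\mathcal A|_P))$.
   Context: An adversary is a set $\mathcal A\subseteq 2^\Pi$ of subsets (live sets) of the process set $\Pi=\{p_1,\dots,p_n\}$. It is superset-closed if $S\in\mathcal A$, $S\subseteq S'\subseteq\Pi$ imply $S'\in\mathcal A$. $\mathcal A|_P=\{S\in\mathcal A: S\subseteq P\}$ and $\mathcal A|_{P,Q}=\{S\in\mathcal A|_P: S\cap Q\neq\emptyset\}$. The set consensus power is defined recursively by $\mathit{setcon}(\emptyset)=0$ and, for $\mathcal A\ne\emptyset$, $\mathit{setcon}(\mathcal A)=\max_{S\in\mathcal A}\min_{a\in S}\mathit{setcon}(\mathcal A|_{S\setminus\{a\}})+1$. $\mathcal A$ is fair if for all $P\subseteq\Pi$ and $Q\subseteq P$, $\mathit{setcon}(\mathcal A|_{P,Q})=\min(|Q|,\mathit{setcon}(\mathcal A|_P))$. (Known fact usable: for superset-closed $\mathcal A$, $\mathit{setcon}(\mathcal A)$ equals the minimum size of a hitting set of $\mathcal A$, i.e. a subset of $\Pi$ meeting every live set.) *)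

(* Defs.v *)
From mathcomp Require Import all_boot.
Set Implicit Arguments. Unset Strict Implicit. Unset Printing Implicit Defensive.

(* Processes Pi = 'I_n; an adversary is a set of live sets. *)
Definition adversary (n : nat) := {set {set 'I_n}}.

Definition superset_closed n (A : adversary n) : Prop :=
  forall S S' : {set 'I_n}, S \in A -> S \subset S' -> S' \in A.

Definition restr n (A : adversary n) (P : {set 'I_n}) : adversary n :=
  [set S in A | S \subset P].

Definition restr2 n (A : adversary n) (P Q : {set 'I_n}) : adversary n :=
  [set S in restr A P | [exists x, (x \in S) && (x \in Q)]].

(* setcon with fuel; each recursive call strictly shrinks the adversary
   (S itself is removed), so fuel #|A| is enough. *)
Fixpoint setcon_fuel n (k : nat) (A : adversary n) : nat :=
  match k with
  | 0 => 0
  | k'.+1 =>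
      if A == set0 then 0 else
      (\max_(S in A) \big[minn/n]_(a in S) setcon_fuel k' (restr A (S :\ a))).+1
  end.

Definition setcon n (A : adversary n) : nat := setcon_fuel #|A| A.

(* Main.v *)
Require Import Defs.
From mathcomp Require Import all_boot.
From mathcomp Require Import zify.

Lemma bigmin_seq_le (I : eqType) (r : seq I) (P : pred I) (F : I -> nat) m i0 :
  i0 \in r -> P i0 -> \big[minn/m]_(i <- r | P i) F i <= F i0.
Proof.
elim: r => [//|x r IH]; rewrite inE big_cons => /orP [/eqP-> ->| Hr Pi0].
  exact: geq_minl.
case: (P x); last exact: IH.
by rewrite geq_min (IH Hr Pi0) orbT.
Qed.

Lemma bigmin_seq_ex (I : eqType) (r : seq I) (P : pred I) (F : I -> nat) m :
  (forall i, F i <= m) -> has P r ->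
  exists i, [/\ i \in r, P i & \big[minn/m]_(i <- r | P i) F i = F i].
Proof.
move=> Fm; elim: r => [//|x r IH] /=; rewrite big_cons.
case Px: (P x) => /=.
  case Hr: (has P r).
    have [i [ir Pi ->]] := IH Hr.
    case: (leqP (F x) (F i)) => h.
      by exists x; split; rewrite ?inE ?eqxx //; apply/minn_idPl.
    by exists i; split; rewrite ?inE ?ir ?orbT //; apply/minn_idPr; apply: ltnW.
  exists x; split; rewrite ?inE ?eqxx // big_hasC ?Hr //; exact/minn_idPl.
move=> Hr; have [i [ir Pi ->]] := IH Hr.
by exists i; rewrite inE ir orbT.
Qed.

Section Main.
Variable n : nat.

Definition hits (B : adversary n) (H : {set 'I_n}) :=
  [forall S in B, [exists x, (x \in H) && (x \in S)]].

Definition hn (B : adversary n) := \big[minn/n]_(H | hits B H) #|H|.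

Lemma hitsP (B : adversary n) (H : {set 'I_n}) : reflect (forall S, S \in B -> exists x, x \in H /\ x \in S) (hits B H).
Proof.
apply: (iffP forall_inP) => h S /h.
  by case/existsP => x /andP [] *; exists x.
by case=> x [] *; apply/existsP; exists x; apply/andP.
Qed.

Lemma hn_le (B : adversary n) (H : {set 'I_n}) : hits B H -> hn B <= #|H|.
Proof. by move=> h; apply: bigmin_seq_le => //; rewrite mem_index_enum. Qed.

Lemma hn_ex (B : adversary n) : set0 \notin B -> exists H, hits B H /\ #|H| = hn B.
Proof.
move=> B0.
have hT : hits B setT.
  apply/hitsP => S SB; have : S != set0 by apply: contraNneq B0 => <-.
  by case/set0Pn => x xS; exists x; rewrite in_setT.
have [i [_ Pi e]] := @bigmin_seq_ex _ (index_enum {set 'I_n}) (hits B)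
   (fun H : {set 'I_n} => #|H|) n
   (fun H => leq_trans (max_card _) (eq_leq (card_ord n)))
   (introT hasP (ex_intro2 _ _ setT (mem_index_enum _) hT)).
by exists i; split => //; rewrite /hn e.
Qed.

Arguments hn_ex {B}.

Lemma hn_le_n (B : adversary n) : set0 \notin B -> hn B <= n.
Proof.
move=> B0; have [H [_ <-]] := hn_ex B0.
exact: leq_trans (max_card _) (eq_leq (card_ord n)).
Qed.

Lemma restr_sub (B : adversary n) X T : T \in restr B X -> T \in B /\ T \subset X.
Proof. by rewrite inE => /andP. Qed.

Lemma main k : forall (B : adversary n) (P : {set 'I_n}), #|B| <= k ->
  (forall S : {set 'I_n}, S \in B -> S \subset P) ->
  (forall S S' : {set 'I_n}, S \in B -> S \subset S' -> S' \subset P -> S' \in B) ->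
  set0 \notin B -> setcon_fuel k B = hn B.
Proof.
elim: k => [|k IH] B P cB hP hC B0.
  have -> : B = set0 by apply/eqP; rewrite -cards_eq0; lia.
  rewrite /=; apply/eqP; rewrite eq_sym -leqn0; rewrite -(cards0 'I_n); apply: hn_le.
  by apply/hitsP => S; rewrite in_set0.
rewrite /=; case: eqP => [->|/eqP Bne].
  apply/eqP; rewrite eq_sym -leqn0; rewrite -(cards0 'I_n); apply: hn_le.
  by apply/hitsP => S; rewrite in_set0.
have IHf : forall S a, S \in B -> a \in S ->
    setcon_fuel k (restr B (S :\ a)) = hn (restr B (S :\ a)).
  move=> S a SB aS; apply: (IH _ (S :\ a)).
  - have : restr B (S :\ a) \proper B.
      apply/properP; split.
        by apply/subsetP => T /restr_sub [].
      exists S => //; rewrite inE SB /=; apply/negP => /subsetP /(_ a aS).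
      by rewrite setD11.
    move/proper_card; lia.
  - by move=> T /restr_sub [].
  - move=> T T' /restr_sub [TB TS] TT' T'S; rewrite inE; apply/andP; split => //.
    apply: (hC T) => //; apply: subset_trans T'S (subset_trans (subD1set _ _) _).
    exact: hP.
  - by apply: contra B0 => /restr_sub [].
have [H [hH cH]] := hn_ex B0.
have [S0 S0B] := set0Pn _ Bne.
have hpos : 0 < hn B.
  rewrite -cH card_gt0; apply/set0Pn.
  by have [x [xH _]] := (elimT (hitsP _ _) hH) S0 S0B; exists x.
have PB : P \in B by apply: (hC S0) => //; exact: hP.
suff : \max_(S in B) \big[minn/n]_(a in S) setcon_fuel k (restr B (S :\ a)) = (hn B).-1.
  by move=> ->; rewrite prednK.
apply/eqP; rewrite eqn_leq; apply/andP; split.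
  apply/bigmax_leqP => S SB.
  have [a [aH aS]] := (elimT (hitsP _ _) hH) S SB.
  apply: leq_trans (@bigmin_seq_le _ _ _ (fun a => setcon_fuel k (restr B (S :\ a))) _ _ (mem_index_enum a) aS) _.
  rewrite IHf //.
  apply: leq_trans (@hn_le _ (H :\ a) _) _.
    apply/hitsP => T /restr_sub [TB TS].
    have [x [xH xT]] := (elimT (hitsP _ _) hH) T TB.
    exists x; split => //; rewrite in_setD1 xH andbT.
    apply: contraTneq xT => ->; apply/negP => /(subsetP TS); by rewrite setD11.
  by move: (cardsD1 a H); rewrite aH cH; lia.
apply: leq_trans (leq_bigmax_cond _ PB).
apply: (big_ind (fun x => (hn B).-1 <= x)).
- have := hn_le_n _ B0; lia.
- by move=> x y hx hy; rewrite leq_min hx hy.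
- move=> a aP; rewrite IHf //.
  have B0' : set0 \notin restr B (P :\ a) by apply: contra B0 => /restr_sub [].
  have [H' [hH' cH']] := hn_ex B0'.
  have : hn B <= #|a |: H'|.
    apply: hn_le; apply/hitsP => T TB.
    case aT: (a \in T); first by exists a; rewrite setU11.
    have TP : T \in restr B (P :\ a).
      rewrite inE TB /=; apply/subsetP => x xT; rewrite in_setD1 (subsetP (hP _ TB)) //.
      by rewrite andbT; apply: contraFneq aT => <-.
    have [x [xH xT]] := (elimT (hitsP _ _) hH') T TP.
    by exists x; rewrite setU1r.
  rewrite cardsU1 cH'; case: (a \notin H') => /=; lia.
Qed.

End Main.
Arguments hn_ex {n B}.

Theorem theorem5 (n : nat) (A : adversary n) :
  superset_closed A -> set0 \notin A ->
  forall P Q : {set 'I_n}, Q \subset P ->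
    setcon (restr2 A P Q) = minn #|Q| (setcon (restr A P)).
Proof.
move=> sc A0 P Q QP.
have r2sub : forall T, T \in restr2 A P Q ->
    [/\ T \in A, T \subset P & exists x, x \in T /\ x \in Q].
  move=> T; rewrite !inE => /andP [/andP [TA TP] /existsP [x /andP [] *]].
  by split => //; exists x.
have B0 : set0 \notin restr A P by apply: contra A0 => /restr_sub [].
have B0' : set0 \notin restr2 A P Q by apply: contra A0 => /r2sub [].
rewrite /setcon (@main _ _ _ P (leqnn _)); first last.
- exact: B0'.
- move=> T T' /r2sub [TA TP [x [xT xQ]]] TT' T'P; rewrite !inE.
  rewrite (sc T T') //= T'P /=; apply/existsP; exists x.
  by rewrite (subsetP TT') .
- by move=> T /r2sub [].
rewrite (@main _ _ _ P (leqnn _)); first last.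
- exact: B0.
- move=> T T' /restr_sub [TA TP] TT' T'P; rewrite !inE.
  by rewrite (sc T T') //= T'P.
- by move=> T /restr_sub [].
apply/eqP; rewrite eqn_leq; apply/andP; split.
  rewrite leq_min; apply/andP; split.
    apply: hn_le; apply/hitsP => T /r2sub [_ _ [x [xT xQ]]].
    by exists x.
  have [H [hH <-]] := hn_ex B0; apply: hn_le; apply/hitsP => T /r2sub [TA TP _].
  have TB : T \in restr A P by rewrite inE TA.
  exact: (elimT (hitsP _ _ _) hH) T TB.
have [H [hH <-]] := hn_ex B0'.
case QH: (Q \subset H); first by rewrite geq_min subset_leq_card.
apply: leq_trans (geq_minr _ _) _; apply: hn_le.
apply/hitsP => T /restr_sub [TA TP].
case/subsetPn: (negbT QH) => q qQ qH.
case E: [exists x, (x \in H) && (x \in T)].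
  by case/existsP: E => x /andP [] *; exists x.
have T'in : P :\: H \in restr2 A P Q.
  rewrite !inE subsetDl andbT.
  apply/andP; split.
    apply: (sc T) => //; apply/subsetP => x xT; rewrite inE (subsetP TP) // andbT.
    apply/negP => xH; move/negbT: E => /existsP; apply; exists x; exact/andP.
  by apply/existsP; exists q; rewrite inE qH (subsetP QP) qQ.
have [x [xH]] := (elimT (hitsP _ _ _) hH) _ T'in.
by rewrite inE xH.
Qed.
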